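(* Let $(X,Y,Z)$ be jointly distributed with $X\in\mathcal X$, $Y\in\mathcal Y$ (a finite set of classes, indexed so that ''smallest index'' is meaningful) and $Z\in\{0,1\}^K$, with $\Pr(Z_k=1)>0$ for all $k\in[K]$. Let $\mathbb P_X$ be the marginal of $X$. Let $r:\mathcal X\times\mathcal Y\to[0,\infty)$ be a pointwise risk, and let $g(x,k)=\Pr(Z_k=1\mid X=x)$. Let $\mathcal C=\{(y_1,\mathcal I_1),\dots,(y_C,\mathcal I_C)\}$ be fairness constraints and $\alpha\in[0,1]$. Assume the uniqueness assumption holds for $(r,g)$ under $\mathbb P_X$. Let $\{\psi_{c,k}:c\in[C],k\in\mathcal I_c\}$ be (the $\psi$-part of) a maximizer of the Dual LP$(r,g,\mathbb P_X,\mathcal C,\alpha)$. Then the classifier $$h(x)=\operatorname*{argmin}_{y\in\mathcal Y}\Big(r(x,y)+\sum_{k\in[K]}g(x,k)w(y,k)\Big),\qquad w(y,k)=-\sum_{c\in[C]}\mathbf 1[y_c=y,\,k\in\mathcal I_c]\frac{\psi_{c,k}}{\Pr(Z_k=1)},$$ (ties broken to the minimizing class with the smallest index) is a minimizer of $$\min_{h:\mathcal X\to\mathcal Y}\mathbb E[r(X,h(X))]\quad\text{subject to } h \text{ satisfying } \alpha\text{-group fairness w.r.t. } \mathcal C,$$ where the minimum is over (possibly randomized) classifiers.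
   Context: Fairness constraints: $\mathcal C=\{(y_c,\mathcal I_c)\}_{c\in[C]}$ with $y_c\in\mathcal Y$ and $\mathcal I_c\subseteq[K]$. A (randomized) classifier $h:\mathcal X\to\mathcal Y$ satisfies $\alpha$-group fairness w.r.t. $\mathcal C$ if $\max_{k,k'\in\mathcal I_c}|\Pr(h(X)=y_c\mid Z_k=1)-\Pr(h(X)=y_c\mid Z_{k'}=1)|\le\alpha$ for all $c\in[C]$ (the randomness of $h$ given $X$ is independent of $(Y,Z)$). Dual LP$(r,g,P,\mathcal C,\alpha)$ for a distribution $P$ on $\mathcal X$: maximize over $\phi:\mathcal X\to\mathbb R$ and reals $\psi=\{\psi_{c,k}:c\in[C],k\in\mathcal I_c\}$ the objective $\mathbb E_{X\sim P}[\phi(X)]-\frac\alpha2\sum_{c\in[C]}\sum_{k\in\mathcal I_c}|\psi_{c,k}|$ subject to $\phi(x)+\sum_{c:y_c=y}\sum_{k\in\mathcal I_c}g(x,k)\frac{\psi_{c,k}}{\mathbb E_{X\sim P}[g(X,k)]}\le r(x,y)$ for all $x\in\mathcal X,y\in\mathcal Y$, and $\sum_{k\in\mathcal I_c}\psi_{c,k}=0$ for all $c$. (For the Bayes $g$ and $P=\mathbb P_X$, $\mathbb E_P[g(X,k)]=\Pr(Z_k=1)$.) Uniqueness assumption for $(r,g)$ under $P$: for every $w:\mathcal Y\times[K]\to\mathbb R$, the set $\operatorname{argmin}_{y\in\mathcal Y}\big(r(X,y)-\sum_k g(X,k)w(y,k)\big)$ has exactly one element for $P$-almost every $X$. *)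

(* Defs.v *)
From HB Require Import structures.
From mathcomp Require Import all_boot all_order all_algebra.
From mathcomp Require Import all_classical all_reals all_analysis.
Set Implicit Arguments. Unset Strict Implicit. Unset Printing Implicit Defensive.
Import Order.TTheory GRing.Theory Num.Theory.
Local Open Scope classical_set_scope.
Local Open Scope ring_scope.

(* The classifier's randomness is
   independent of (Y,Z) given X, so Pr(h(X)=y, Z_k=1) = E[q(X,y) 1{Z_k=1}]. *)
Definition rand_classifier d (TX : measurableType d) (R : realType) (n : nat)
  (q : TX -> 'I_n.+1 -> R) : Prop :=
  [/\ forall x y, 0 <= q x y,
      forall x, \sum_(y < n.+1) q x y = 1
    & forall y, measurable_fun setT (fun x => q x y)].

Definition det_classifier d (TX : measurableType d) (R : realType) (n : nat)
  (h : TX -> 'I_n.+1) : TX -> 'I_n.+1 -> R :=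
  fun x y => if h x == y then 1 else 0.

(* Pr(h(X) = y | Z_k = 1), events E k = {Z_k = 1} *)
Definition cond_pred dO d (Om : measurableType dO) (TX : measurableType d)
  (R : realType) (P : probability Om R) (X : Om -> TX) (K n : nat)
  (E : 'I_K -> set Om) (q : TX -> 'I_n.+1 -> R) (y : 'I_n.+1) (k : 'I_K) : R :=
  fine (\int[P]_(w in E k) (q (X w) y)%:E) / fine (P (E k)).

Definition group_fair dO d (Om : measurableType dO) (TX : measurableType d)
  (R : realType) (P : probability Om R) (X : Om -> TX) (K n C : nat)
  (E : 'I_K -> set Om) (yc : 'I_C -> 'I_n.+1) (Ic : 'I_C -> {set 'I_K})
  (alpha : R) (q : TX -> 'I_n.+1 -> R) : Prop :=
  forall c k k', k \in Ic c -> k' \in Ic c ->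
    `| cond_pred P X E q (yc c) k - cond_pred P X E q (yc c) k' | <= alpha.

Definition risk dO d (Om : measurableType dO) (TX : measurableType d)
  (R : realType) (P : probability Om R) (X : Om -> TX) (n : nat)
  (r : TX -> 'I_n.+1 -> R) (q : TX -> 'I_n.+1 -> R) : \bar R :=
  \int[P]_w (\sum_(y < n.+1) q (X w) y * r (X w) y)%:E.

Definition expect d (TX : measurableType d) (R : realType)
  (mu : probability TX R) (f : TX -> R) : R := fine (\int[mu]_x (f x)%:E).

Definition dual_feasible d (TX : measurableType d) (R : realType)
  (n K C : nat) (r : TX -> 'I_n.+1 -> R) (g : TX -> 'I_K -> R)
  (mu : probability TX R) (yc : 'I_C -> 'I_n.+1) (Ic : 'I_C -> {set 'I_K})
  (phi : TX -> R) (psi : 'I_C -> 'I_K -> R) : Prop :=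
  [/\ mu.-integrable setT (fun x => (phi x)%:E),
      forall x y, phi x + \sum_(c < C | yc c == y) \sum_(k in Ic c)
          g x k * psi c k / expect mu (fun x' => g x' k) <= r x y
    & forall c, \sum_(k in Ic c) psi c k = 0].

Definition dual_obj d (TX : measurableType d) (R : realType) (K C : nat)
  (mu : probability TX R) (Ic : 'I_C -> {set 'I_K}) (alpha : R)
  (phi : TX -> R) (psi : 'I_C -> 'I_K -> R) : R :=
  expect mu phi - alpha / 2 * \sum_(c < C) \sum_(k in Ic c) `|psi c k|.

Definition dual_maximizer d (TX : measurableType d) (R : realType)
  (n K C : nat) (r : TX -> 'I_n.+1 -> R) (g : TX -> 'I_K -> R)
  (mu : probability TX R) (yc : 'I_C -> 'I_n.+1) (Ic : 'I_C -> {set 'I_K})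
  (alpha : R) (phi : TX -> R) (psi : 'I_C -> 'I_K -> R) : Prop :=
  dual_feasible r g mu yc Ic phi psi /\
  forall phi' psi', dual_feasible r g mu yc Ic phi' psi' ->
    dual_obj mu Ic alpha phi' psi' <= dual_obj mu Ic alpha phi psi.

Definition argmin_first (R : realType) (n : nat) (f : 'I_n.+1 -> R) : 'I_n.+1 :=
  head ord0 [seq y <- enum 'I_n.+1 | [forall y', f y <= f y']].

Definition is_argmin (R : realType) (n : nat) (f : 'I_n.+1 -> R) (y : 'I_n.+1) : Prop :=
  forall y', f y <= f y'.

Definition uniqueness_assumption d (TX : measurableType d) (R : realType)
  (n K : nat) (r : TX -> 'I_n.+1 -> R) (g : TX -> 'I_K -> R)
  (mu : probability TX R) : Prop :=
  forall w : 'I_n.+1 -> 'I_K -> R,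
    {ae mu, forall x, exists! y,
        is_argmin (fun y' => r x y' - \sum_(k < K) g x k * w y' k) y}.

Definition is_cond_prob dO d (Om : measurableType dO) (TX : measurableType d)
  (R : realType) (P : probability Om R) (X : Om -> TX) (K : nat)
  (E : 'I_K -> set Om) (g : TX -> 'I_K -> R) : Prop :=
  forall k, measurable_fun setT (fun x => g x k) /\
    forall A, measurable A ->
      (\int[P]_(w in X @^-1` A) (g (X w) k)%:E = P (X @^-1` A `&` E k))%E.

(* Main.v *)
Require Import Defs.
From HB Require Import structures.
From mathcomp Require Import all_boot all_order all_algebra.
From mathcomp Require Import all_classical all_reals all_analysis.
From mathcomp Require Import measurable_realfun ring lra.
Import Order.TTheory GRing.Theory Num.Theory.
Local Open Scope classical_set_scope.
Local Open Scope ring_scope.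
Section Argmin.
Context {R : realType} {n : nat}.
Implicit Types f : 'I_n.+1 -> R.

Definition pa f (y : 'I_n.+1) : bool := [forall y', f y <= f y'].

Lemma head_filter_nth (T : Type) (x0 : T) (p : pred T) s :
  head x0 [seq x <- s | p x] = nth x0 s (find p s).
Proof. by elim: s => //= a s IH; case: (p a). Qed.

Lemma has_pa f : has (pa f) (enum 'I_n.+1).
Proof.
case: (@arg_minP _ _ _ ord0 predT f isT) => y _ Hy.
apply/hasP; exists y; first by rewrite mem_enum.
by apply/forallP => y'; exact: Hy.
Qed.

Lemma argmin_firstP f : is_argmin f (argmin_first f).
Proof.
rewrite /argmin_first head_filter_nth => y.
by have /forallP := nth_find ord0 (has_pa f); apply.
Qed.

Lemma argmin_first_val f : nat_of_ord (argmin_first f) = find (pa f) (enum 'I_n.+1).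
Proof.
rewrite /argmin_first head_filter_nth nth_enum_ord //.
by rewrite -[X in (_ < X)%N](size_enum_ord n.+1) -has_find has_pa.
Qed.

Lemma argmin_first_eq f y : (argmin_first f == y) =
  pa f y && [forall y' : 'I_n.+1, (y' < y)%N ==> ~~ pa f y'].
Proof.
rewrite -val_eqE /= argmin_first_val.
have Hh := has_pa f.
have ilt : (find (pa f) (enum 'I_n.+1) < n.+1)%N.
  by rewrite -[X in (_ < X)%N](size_enum_ord n.+1) -has_find.
apply/idP/idP.
- move/eqP => Hf; apply/andP; split.
    by have := nth_find ord0 Hh; rewrite Hf nth_ord_enum.
  apply/forallP => y'; apply/implyP => lt.
  have := @before_find _ ord0 (pa f) (enum 'I_n.+1) y'.
  by rewrite Hf nth_ord_enum => ->.
- case/andP => py /forallP hb; rewrite eqn_leq; apply/andP; split.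
    rewrite leqNgt; apply/negP => lt.
    by have := @before_find _ ord0 (pa f) (enum 'I_n.+1) y lt; rewrite nth_ord_enum py.
  rewrite leqNgt; apply/negP => lt.
  have := hb (Ordinal ilt); rewrite /= lt /=.
  have := nth_find ord0 Hh.
  have -> : nth ord0 (enum 'I_n.+1) (find (pa f) (enum 'I_n.+1)) = Ordinal ilt.
    by apply: val_inj; rewrite /= nth_enum_ord.
  by move=> ->.
Qed.

Lemma argmin_first_uniq f y : is_argmin f y ->
  (forall y', is_argmin f y' -> y' = y) -> argmin_first f = y.
Proof. by move=> _ H; apply: H; exact: argmin_firstP. Qed.

Lemma sum_ind_eq (h : 'I_n.+1) (G : 'I_n.+1 -> R) :
  \sum_(y < n.+1) (if h == y then 1 else 0) * G y = G h.
Proof.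
rewrite (bigD1 h) //= eqxx mul1r big1 ?addr0 // => y yh.
by rewrite eq_sym (negbTE yh) mul0r.
Qed.

End Argmin.
Lemma forall_all_enum (T' : finType) (Pr : pred T') :
  [forall i, Pr i] = all Pr (enum T').
Proof.
apply/forallP/allP => H i //; apply: H; by rewrite mem_enum.
Qed.

Section Meas.
Context (d : measure_display) (T : measurableType d) (R : realType) (n : nat).

Lemma measurable_all (I : Type) (s : seq I) (B : I -> T -> bool) :
  (forall i, measurable_fun setT (B i)) ->
  measurable_fun setT (fun x => all (fun i => B i x) s).
Proof.
move=> mB; elim: s => [|a s IH] /=; first exact: measurable_cst.
exact: measurable_and.
Qed.

Context (F : T -> 'I_n.+1 -> R) (mF : forall y, measurable_fun setT (F ^~ y)).

Lemma measurable_pa y : measurable_fun setT (fun x => pa (F x) y).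
Proof.
have -> : (fun x => pa (F x) y) =
    (fun x => all (fun y' => F x y <= F x y') (enum 'I_n.+1)).
  by apply: funext => x; rewrite /pa forall_all_enum.
apply: measurable_all => y'; exact: measurable_fun_ler.
Qed.

Lemma measurable_argmin_eq y :
  measurable_fun setT (fun x => argmin_first (F x) == y).
Proof.
have -> : (fun x => argmin_first (F x) == y) = (fun x => pa (F x) y &&
    all (fun y' : 'I_n.+1 => (y' < y)%N ==> ~~ pa (F x) y') (enum 'I_n.+1)).
  by apply: funext => x; rewrite argmin_first_eq forall_all_enum.
apply: measurable_and; first exact: measurable_pa.
apply: measurable_all => y'; case: (y' < y)%N => /=.
  by apply: measurable_neg; exact: measurable_pa.
exact: measurable_cst.
Qed.

Lemma measurable_ind y :
  measurable_fun setT (fun x => if argmin_first (F x) == y then (1:R) else 0).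
Proof.
by apply: measurable_fun_if => //; exact: measurable_argmin_eq.
Qed.

Lemma measurable_argmin_app (G : T -> 'I_n.+1 -> R)
  (mG : forall y, measurable_fun setT (G ^~ y)) :
  measurable_fun setT (fun x => G x (argmin_first (F x))).
Proof.
have -> : (fun x => G x (argmin_first (F x))) = (fun x => \sum_(y < n.+1)
    (if argmin_first (F x) == y then 1 else 0) * G x y).
  by apply: funext => x; rewrite sum_ind_eq.
apply: measurable_sum => y; apply: measurable_funM => //; exact: measurable_ind.
Qed.

End Meas.
Section Push.
Context {R : realType} {dO : measure_display} {Om : measurableType dO}
  (P : probability Om R) {d : measure_display} {TX : measurableType d}
  (X : {mfun Om >-> TX}).

Local Notation mX := (measurable_funPT X).

Lemma PF (A : set TX) (f : TX -> \bar R) : measurable A ->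
  measurable_fun setT f ->
  (\int[distribution P X]_(x in A) f x = \int[P]_(w in X @^-1` A) f (X w))%E.
Proof.
move=> mA mf; rewrite integralE [in RHS]integralE.
have mfA : measurable_fun A f := measurable_funTS mf.
congr (_ - _)%E.
- have H := @ge0_integral_pushforward _ _ _ _ _ X mX P A (f^\+)%E mA
    (measurable_funepos mfA) (fun y _ => funepos_ge0 f y).
  transitivity (\int[P]_(x in X @^-1` A) ((f^\+)%E \o X) x)%E; last by rewrite -funepos_comp.
  rewrite -H; exact: eq_measure_integral.
- have H := @ge0_integral_pushforward _ _ _ _ _ X mX P A (f^\-)%E mA
    (measurable_funeneg mfA) (fun y _ => funeneg_ge0 f y).
  transitivity (\int[P]_(x in X @^-1` A) ((f^\-)%E \o X) x)%E; last by rewrite -funeneg_comp.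
  rewrite -H; exact: eq_measure_integral.
Qed.

Section nuE.
Context (E : set Om) (mE : measurable E).

Definition nuE (_ : measurable E) (A : set TX) : \bar R := P (X @^-1` A `&` E).
Local Notation nu := (nuE mE).

Let nuE0 : nu set0 = 0%E.
Proof. by rewrite /nuE preimage_set0 set0I measure0. Qed.

Let nuE_ge0 A : (0 <= nu A)%E.
Proof. exact: measure_ge0. Qed.

Let nuE_sigma : semi_sigma_additive nu.
Proof.
move=> F mF tF mUF; rewrite /nuE preimage_bigcup setI_bigcupl.
apply: measure_semi_sigma_additive.
- move=> i; apply: measurableI => //.
  by rewrite -[X in measurable X]setTI; exact: mX.
- apply/trivIsetP => /= i j _ _ ij.
  rewrite setIACA setIid -preimage_setI.
  by move/trivIsetP : tF => /(_ _ _ _ _ ij) ->//; rewrite preimage_set0 set0I.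
- rewrite -setI_bigcupl; apply: measurableI => //.
  by rewrite -preimage_bigcup -[X in measurable X]setTI; exact: mX.
Qed.

HB.instance Definition _ := isMeasure.Build _ _ _ nu nuE0 nuE_ge0 nuE_sigma.

Let nuE_fin : fin_num_fun nu.
Proof.
apply: lty_fin_num_fun; rewrite /nuE.
apply: (le_lt_trans (probability_le1 P _)) => //; last exact: ltry.
apply: measurableI => //; rewrite -[X in measurable X]setTI; exact: mX.
Qed.

HB.instance Definition _ := Measure_isFinite.Build _ _ _ nu nuE_fin.

Lemma integral_nuE (f : TX -> \bar R) : measurable_fun setT f ->
  (forall x, 0 <= f x)%E ->
  (\int[nu]_x f x = \int[P]_(w in E) f (X w))%E.
Proof.
move=> mf f0.
pose m := mrestr P mE.
have H := @ge0_integral_pushforward _ _ _ _ _ X mX m setT f measurableT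
    mf (fun y _ => f0 y).
transitivity (\int[m]_(w in X @^-1` setT) (f \o X) w)%E.
  rewrite -H; exact: eq_measure_integral.
rewrite preimage_setT.
rewrite (ge0_negligible_integral _ (N := ~` E)); first last.
- by change (P (~` E `&` E) = 0%E); rewrite setICl measure0.
- by move=> x _; exact: f0.
- exact: measurableT_comp.
- by [].
- exact: measurableC.
rewrite setTD setCK; apply: eq_measure_integral => /= A mA AE.
by rewrite /m /mrestr setIidl.
Qed.

End nuE.
End Push.
Section RHelp.
Context {d : measure_display} {T : measurableType d} {R : realType}
  (mu : {measure set T -> \bar R}).

Lemma integrable_sumR (I : Type) (s : seq I) (Pr : pred I) (f : I -> T -> R) :
  (forall i, mu.-integrable setT (EFin \o f i)) ->
  mu.-integrable setT (EFin \o (fun x => \sum_(i <- s | Pr i) f i x)).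
Proof.
move=> fi; elim: s => [|a s IH].
  have -> : (EFin \o (fun x => \sum_(i <- [::] | Pr i) f i x)) = cst 0%E.
    by apply: funext => x; rewrite /= big_nil.
  exact: integrable0.
case: (boolP (Pr a)) => Pa.
  have -> : (EFin \o (fun x => \sum_(i <- a :: s | Pr i) f i x)) =
      ((EFin \o f a) \+ (EFin \o (fun x => (\sum_(i <- s | Pr i) f i x)%R)))%E.
    by apply: funext => x; rewrite /= big_cons Pa EFinD.
  exact: integrableD.
have -> : (EFin \o (fun x => \sum_(i <- a :: s | Pr i) f i x)) =
    (EFin \o (fun x => \sum_(i <- s | Pr i) f i x)).
  by apply: funext => x; rewrite /= big_cons (negbTE Pa).
exact: IH.
Qed.

Lemma Rintegral_sumR (I : Type) (s : seq I) (Pr : pred I) (f : I -> T -> R) :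
  (forall i, mu.-integrable setT (EFin \o f i)) ->
  Rintegral mu setT (fun x => \sum_(i <- s | Pr i) f i x) =
  \sum_(i <- s | Pr i) Rintegral mu setT (f i).
Proof.
move=> fi; elim: s => [|a s IH].
  rewrite big_nil (_ : (fun x => _) = (fun=> 0)); last first.
    by apply: funext => x; rewrite big_nil.
  by rewrite Rintegral_cst // mul0r.
rewrite big_cons; case: (boolP (Pr a)) => Pa.
  rewrite (_ : (fun x => _) = (fun x => f a x + \sum_(i <- s | Pr i) f i x)); last first.
    by apply: funext => x; rewrite big_cons Pa.
  rewrite RintegralD //; first by rewrite IH.
  exact: integrable_sumR.
rewrite (_ : (fun x => _) = (fun x => \sum_(i <- s | Pr i) f i x)) //.
by apply: funext => x; rewrite big_cons (negbTE Pa).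
Qed.

Lemma integrableZR (a : R) (f : T -> R) :
  mu.-integrable setT (EFin \o f) ->
  mu.-integrable setT (EFin \o (fun x => a * f x)).
Proof.
move=> fi; have -> : (EFin \o (fun x => a * f x)) = (fun x => a%:E * (EFin \o f) x)%E.
  by apply: funext => x; rewrite /= EFinM.
exact: integrableZl.
Qed.

Lemma integrableZRr (a : R) (f : T -> R) :
  mu.-integrable setT (EFin \o f) ->
  mu.-integrable setT (EFin \o (fun x => f x * a)).
Proof.
move=> fi; under eq_fun do rewrite mulrC; exact: integrableZR.
Qed.

End RHelp.
Section Main.
Context (R : realType) (dO : measure_display) (Om : measurableType dO)
  (P : probability Om R) (d : measure_display) (TX : measurableType d)
  (X : {mfun Om >-> TX}) (n K C : nat) (E : 'I_K -> set Om)
  (r : TX -> 'I_n.+1 -> R) (g : TX -> 'I_K -> R)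
  (yc : 'I_C -> 'I_n.+1) (Ic : 'I_C -> {set 'I_K}) (alpha : R)
  (phi : TX -> R) (psi : 'I_C -> 'I_K -> R).
Context (mE : forall k, measurable (E k)) (PE0 : forall k, (0 < P (E k))%E)
  (r0 : forall x y, 0 <= r x y)
  (mr : forall y, measurable_fun setT (fun x => r x y))
  (gcp : is_cond_prob P X E g) (alpha01 : 0 <= alpha <= 1)
  (uniqA : uniqueness_assumption r g (distribution P X))
  (dmax : dual_maximizer r g (distribution P X) yc Ic alpha phi psi).

Local Notation mu := (distribution P X).

Definition pk k := fine (P (E k)).

Lemma PEk k : P (E k) = (pk k)%:E.
Proof.
rewrite /pk fineK // ge0_fin_numE //.
by rewrite (le_lt_trans (probability_le1 P (mE k))) // ltry.
Qed.

Lemma pk_gt0 k : 0 < pk k.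
Proof. by have := PE0 k; rewrite PEk lte_fin. Qed.

Lemma mg k : measurable_fun setT (fun x => g x k).
Proof. exact: (gcp k).1. Qed.

Lemma int_g_set k A : measurable A ->
  (\int[mu]_(x in A) (g x k)%:E = P (X @^-1` A `&` E k))%E.
Proof.
move=> mA; rewrite PF //; first exact: (gcp k).2.
exact/measurable_EFinP/mg.
Qed.

Lemma g_int k : mu.-integrable setT (EFin \o (fun x => g x k)).
Proof.
apply/integrableP; split; first exact/measurable_EFinP/mg.
apply/abse_integralP => //; first exact/measurable_EFinP/mg.
by rewrite int_g_set // preimage_setT setTI PEk /= ltry.
Qed.

Lemma expect_g k : expect mu (fun x => g x k) = pk k.
Proof. by rewrite /expect int_g_set // preimage_setT setTI. Qed.

Definition S (de : 'I_C -> 'I_K -> R) x y :=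
  \sum_(c < C | yc c == y) \sum_(k in Ic c) g x k * de c k / pk k.
Definition W (de : 'I_C -> 'I_K -> R) y k :=
  \sum_(c < C | (yc c == y) && (k \in Ic c)) de c k / pk k.

Lemma SE de x y : S de x y = \sum_(k < K) g x k * W de y k.
Proof.
rewrite /S /W.
transitivity (\sum_(c < C) \sum_(k < K)
   (if (yc c == y) && (k \in Ic c) then g x k * de c k / pk k else 0)).
  rewrite big_mkcond; apply: eq_bigr => c _.
  case: (yc c == y) => /=; last by rewrite big1.
  by rewrite big_mkcond.
rewrite exchange_big; apply: eq_bigr => k _.
rewrite mulr_sumr [RHS]big_mkcond; apply: eq_bigr => c _.
by case: ifP => _; rewrite ?mulr0 // mulrA.
Qed.

Lemma mS de y : measurable_fun setT (fun x => S de x y).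
Proof.
rewrite (_ : (fun x => S de x y) = (fun x => \sum_(k < K) g x k * W de y k)).
  apply: measurable_sum => k; apply: measurable_funM; first exact: mg.
  exact: measurable_cst.
by apply: funext => x; rewrite SE.
Qed.

Lemma iS de y : mu.-integrable setT (EFin \o (fun x => S de x y)).
Proof.
rewrite (_ : (fun x => S de x y) = (fun x => \sum_(k < K) g x k * W de y k)).
  apply: integrable_sumR => k; apply: integrableZRr; exact: g_int.
by apply: funext => x; rewrite SE.
Qed.

Lemma S_lin de1 de2 (t : R) x y :
  S (fun c k => de1 c k + t * de2 c k) x y = S de1 x y + t * S de2 x y.
Proof.
rewrite /S mulr_sumr -big_split; apply: eq_bigr => c _.
rewrite mulr_sumr -big_split; apply: eq_bigr => k _ /=.
by rewrite mulrDr mulrDl; congr (_ + _); rewrite !mulrA [t * g x k]mulrC.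
Qed.

Definition L x y := r x y - S psi x y.

Lemma mL y : measurable_fun setT (fun x => L x y).
Proof. exact: measurable_funB (mr y) (mS psi y). Qed.

Lemma phi_le_L x y : phi x <= L x y.
Proof.
have [[_ Hc _] _] := dmax; have := Hc x y.
under eq_bigr => c _ do under eq_bigr => k _ do rewrite expect_g.
rewrite -/(S psi x y) /L => H; lra.
Qed.

Definition hh x := argmin_first (fun y => r x y + \sum_(k < K) g x k *
  (- \sum_(c < C | (yc c == y) && (k \in Ic c)) psi c k / fine (P (E k)))).

Lemma hhE x : hh x = argmin_first (L x).
Proof.
rewrite /hh; congr argmin_first; apply: funext => y.
rewrite /L SE /W /pk; under eq_bigr do rewrite mulrN.
by rewrite sumrN.
Qed.

Lemma m_app (G : TX -> 'I_n.+1 -> R) :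
  (forall y, measurable_fun setT (G ^~ y)) ->
  measurable_fun setT (fun x => G x (hh x)).
Proof.
move=> mG; rewrite (_ : (fun x => G x (hh x)) =
  (fun x => G x (argmin_first (L x)))); last first.
  by apply: funext => x; rewrite hhE.
by apply: measurable_argmin_app => // y; exact: mL.
Qed.

Lemma CP (Q : TX -> R) k : measurable_fun setT Q ->
  (forall x, 0 <= Q x <= 1) ->
  (\int[mu]_x (Q x * g x k)%:E = \int[P]_(w in E k) (Q (X w))%:E)%E.
Proof.
move=> mQ Q01.
pose nu : {finite_measure set TX -> \bar R} := @nuE _ _ _ P _ _ X (E k) (mE k).
have nu_mu : nu `<< mu.
  move=> N HN A mA AN; apply/eqP; rewrite eq_le measure_ge0 andbT.
  rewrite -(HN A mA AN) /nu /nuE /=.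
  apply: le_measure; rewrite ?inE //.
  - apply: measurableI => //; rewrite -[X in measurable X]setTI.
    exact: (measurable_funPT X).
  - rewrite -[X in measurable X]setTI; exact: (measurable_funPT X).
pose rn := Radon_Nikodym (charge_of_finite_measure nu) mu.
have rn_int : mu.-integrable setT rn :=
  @Radon_Nikodym_integrable _ _ _ (charge_of_finite_measure nu) mu nu_mu.
have ae_g : ae_eq mu setT rn (EFin \o (fun x => g x k)).
  apply: integral_ae_eq => //; first exact/measurable_EFinP/mg.
  move=> A _ mA; rewrite -(@Radon_Nikodym_integral _ _ _ (charge_of_finite_measure nu) mu) //.
  by rewrite int_g_set.
transitivity (\int[mu]_x ((Q x)%:E * rn x))%E.
  apply: ae_eq_integral => //.
  - apply/measurable_EFinP; apply: measurable_funM => //; exact: mg.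
  - apply: emeasurable_funM; first exact/measurable_EFinP.
    exact: measurable_int rn_int.
  - have := ae_eqe_mul2l (EFin \o Q) (ae_eq_sym ae_g).
    apply: filterS => x /= H Tx; rewrite EFinM; exact: H.
rewrite Radon_Nikodym_change_of_variables //.
- rewrite integral_nuE //; first exact/measurable_EFinP.
  by move=> x; rewrite lee_fin; case/andP: (Q01 x).
- apply: (le_integrable measurableT _ _ (finite_measure_integrable_cst nu 1 measurableT)).
    exact/measurable_EFinP.
  move=> x _ /=; rewrite lee_fin normr1 ger0_norm; case/andP: (Q01 x) => //.
Qed.


Definition B (q : TX -> 'I_n.+1 -> R) y k := cond_pred P X E q y k.

Lemma int_Qg (Q : TX -> R) k : measurable_fun setT Q ->
  (forall x, 0 <= Q x <= 1) ->
  mu.-integrable setT (EFin \o (fun x => Q x * g x k)).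
Proof.
move=> mQ Q01; apply: (le_integrable measurableT _ _ (g_int k)).
  by apply/measurable_EFinP; apply: measurable_funM => //; exact: mg.
move=> x _ /=; rewrite lee_fin normrM.
case/andP: (Q01 x) => Q0 Q1.
by rewrite ler_piMl // ger0_norm.
Qed.

Lemma Rint_Qg (Q : TX -> R) k : measurable_fun setT Q ->
  (forall x, 0 <= Q x <= 1) ->
  Rintegral mu setT (fun x => Q x * g x k) =
  fine (\int[P]_(w in E k) (Q (X w))%:E)%E.
Proof. by move=> mQ Q01; rewrite /Rintegral CP. Qed.

Lemma rand01 (q : TX -> 'I_n.+1 -> R) : rand_classifier q -> forall x y, 0 <= q x y <= 1.
Proof.
case=> q0 q1 _ x y; rewrite q0 /= -(q1 x) (bigD1 y) //= lerDl.
by apply: sumr_ge0 => i _.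
Qed.

Lemma int_qS (q : TX -> 'I_n.+1 -> R) de : rand_classifier q ->
  mu.-integrable setT (EFin \o (fun x => \sum_(y < n.+1) q x y * S de x y)) /\
  Rintegral mu setT (fun x => \sum_(y < n.+1) q x y * S de x y) =
  \sum_(c < C) \sum_(k in Ic c) de c k * B q (yc c) k.
Proof.
move=> rq; have q01 := rand01 _ rq; case: rq => q0 q1 mq.
have E1 : (fun x => \sum_(y < n.+1) q x y * S de x y) = (fun x =>
    \sum_(c < C) \sum_(k in Ic c) (de c k / pk k) * (q x (yc c) * g x k)).
  apply: funext => x; rewrite /S.
  under eq_bigr do rewrite mulr_sumr.
  rewrite (exchange_big_dep xpredT) //=; apply: eq_bigr => c _.
  rewrite (big_pred1 (yc c)); last by move=> y; rewrite /= eq_sym.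
  rewrite mulr_sumr; apply: eq_bigr => k _.
  by ring.
rewrite E1; split.
  apply: integrable_sumR => c; apply: integrable_sumR => k.
  by apply: integrableZR; apply: int_Qg.
rewrite Rintegral_sumR; last first.
  move=> c; apply: integrable_sumR => k.
  by apply: integrableZR; apply: int_Qg.
apply: eq_bigr => c _; rewrite Rintegral_sumR; last first.
  by move=> k; apply: integrableZR; apply: int_Qg.
apply: eq_bigr => k _; rewrite RintegralZl //; last exact: int_Qg.
rewrite Rint_Qg // /B /cond_pred -/(pk k).
have := pk_gt0 k; set p := pk k => p0.
by field; rewrite gt_eqF.
Qed.

Lemma int_close (f1 f2 Bd : TX -> R) :
  mu.-integrable setT (EFin \o f2) -> measurable_fun setT f1 ->
  mu.-integrable setT (EFin \o Bd) ->
  (forall x, `|f1 x - f2 x| <= Bd x) -> mu.-integrable setT (EFin \o f1).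
Proof.
move=> i2 m1 iB H.
have -> : EFin \o f1 = ((EFin \o f2) \+ (EFin \o (fun x => (f1 x - f2 x)%R)))%E.
  by apply: funext => x /=; rewrite -EFinD addrC subrK.
apply: integrableD => //; apply: (le_integrable measurableT _ _ iB).
  by apply/measurable_EFinP; apply: measurable_funB => //; case/integrableP: i2 => /measurable_EFinP.
move=> x _ /=; rewrite lee_fin (le_trans (H x)) //.
by rewrite ler_norm.
Qed.
Definition phi0 x := L x (hh x).

Lemma phi0_le x y : phi0 x <= L x y.
Proof. by rewrite /phi0 hhE; exact: argmin_firstP. Qed.

Lemma phi_le_phi0 x : phi x <= phi0 x.
Proof. exact: phi_le_L. Qed.

Lemma mphi0 : measurable_fun setT phi0.
Proof. by apply: m_app => y; exact: mL. Qed.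

Lemma phi_int : mu.-integrable setT (EFin \o phi).
Proof. by case: dmax => -[]. Qed.

Lemma mphi : measurable_fun setT phi.
Proof. by case/integrableP: phi_int => /measurable_EFinP. Qed.

Definition Nn (de : 'I_C -> 'I_K -> R) := \sum_(c < C) \sum_(k in Ic c) `|de c k|.

Lemma feasI phi' psi' : mu.-integrable setT (EFin \o phi') ->
  (forall x y, phi' x + S psi' x y <= r x y) ->
  (forall c, \sum_(k in Ic c) psi' c k = 0) ->
  dual_feasible r g mu yc Ic phi' psi'.
Proof.
move=> i H1 H2; split => // x y.
under eq_bigr => c _ do under eq_bigr => k _ do rewrite expect_g.
exact: H1.
Qed.

Lemma optI phi' psi' : dual_feasible r g mu yc Ic phi' psi' ->
  Rintegral mu setT phi' - alpha / 2 * Nn psi' <=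
  Rintegral mu setT phi - alpha / 2 * Nn psi.
Proof. by move=> F; have [_ H] := dmax; exact: H. Qed.

Lemma psi_row c : \sum_(k in Ic c) psi c k = 0.
Proof. by case: dmax => -[]. Qed.

Lemma phi_ae : ae_eq mu setT (EFin \o phi0) (EFin \o phi).
Proof.
pose phi1 x := Num.min (phi0 x) (phi x + 1).
have m1 : measurable_fun setT phi1.
  apply: measurable_minr; first exact: mphi0.
  by apply: measurable_funD; [exact: mphi|exact: measurable_cst].
have b1 x : 0 <= phi1 x - phi x <= 1.
  have := phi_le_phi0 x; rewrite /phi1 => h.
  rewrite subr_ge0 le_min h lerDl ler01 /= lerBlDl ge_min.
  by rewrite addrC lexx orbT.
have i1 : mu.-integrable setT (EFin \o phi1).
  apply: (int_close phi1 phi (cst 1) phi_int m1 (finite_measure_integrable_cst mu 1 measurableT)).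
  by move=> x; have /andP[h1 h2] := b1 x; rewrite ger0_norm.
have F1 : dual_feasible r g mu yc Ic phi1 psi.
  apply: feasI => //; last exact: psi_row.
  move=> x y; have := phi0_le x y; have : phi1 x <= phi0 x by rewrite /phi1 ge_min lexx.
  rewrite /L; lra.
have := optI _ _ F1 => Hopt.
have Rd : Rintegral mu setT (fun x => phi1 x - phi x) <= 0.
  by rewrite RintegralB //; last exact: phi_int; lra.
have iD : mu.-integrable setT (EFin \o (fun x => phi1 x - phi x)).
  apply: (int_close _ (fun=> 0) (cst 1) _ _ (finite_measure_integrable_cst mu 1 measurableT)).
  - exact: (finite_measure_integrable_cst mu 0 measurableT).
  - by apply: measurable_funB => //; exact: mphi.
  - by move=> x; have /andP[h1 h2] := b1 x; rewrite subr0 ger0_norm.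
have ae0 : ae_eq mu setT (EFin \o (fun x => phi1 x - phi x)) (cst 0%E).
  apply/ae_eq_integral_abs => //.
    by apply/measurable_EFinP; apply: measurable_funB => //; exact: mphi.
  have -> : (\int[mu]_x `|(EFin \o (fun x => (phi1 x - phi x)%R)) x|)%E =
       (\int[mu]_x (EFin \o (fun x => (phi1 x - phi x)%R)) x)%E.
    by apply: eq_integral => x _ /=; rewrite ger0_norm //; case/andP: (b1 x).
  apply/eqP; rewrite eq_le; apply/andP; split; last first.
    by apply: integral_ge0 => x _; rewrite lee_fin; case/andP: (b1 x).
  rewrite -(fineK (integrable_fin_num measurableT iD)) lee_fin.
  exact: Rd.
apply: filterS ae0 => x /= H Tx; have := H Tx => /eqP; rewrite eqe subr_eq0 => /eqP.
rewrite /phi1; have [h|h] := leP (phi0 x) (phi x + 1).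
  by move=> ->.
by move=> h2; exfalso; lra.
Qed.

Lemma phi0_int : mu.-integrable setT (EFin \o phi0).
Proof.
apply/integrableP; split; first exact/measurable_EFinP/mphi0.
rewrite (ae_eq_integral (fun x => `|(phi x)%:E|)%E) //.
- by case/integrableP: phi_int.
- by apply: measurableT_comp => //; exact/measurable_EFinP/mphi0.
- by apply: measurableT_comp => //; exact/measurable_EFinP/mphi.
- by apply: filterS phi_ae => x /= H Tx; case: (H Tx) => ->.
Qed.

Lemma Rint_phi0 : Rintegral mu setT phi0 = Rintegral mu setT phi.
Proof.
rewrite /Rintegral (ae_eq_integral (EFin \o phi)) //.
- exact/measurable_EFinP/mphi0.
- exact/measurable_EFinP/mphi.
- exact: phi_ae.
Qed.
Definition bh c k := B (det_classifier R hh) (yc c) k.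

Lemma det_rand : rand_classifier (det_classifier R hh).
Proof.
split.
- by move=> x y; rewrite /det_classifier; case: ifP.
- move=> x; rewrite /det_classifier.
  by have := sum_ind_eq (hh x) (fun=> (1 : R)); under eq_bigr do rewrite mulr1.
- move=> y; rewrite /det_classifier.
  rewrite (_ : (fun x => _) = (fun x => if argmin_first (L x) == y then 1 else 0)).
    by apply: measurable_ind => y'; exact: mL.
  by apply: funext => x; rewrite hhE.
Qed.

Lemma int_Sh de :
  mu.-integrable setT (EFin \o (fun x => S de x (hh x))) /\
  Rintegral mu setT (fun x => S de x (hh x)) =
  \sum_(c < C) \sum_(k in Ic c) de c k * bh c k.
Proof.
have [H1 H2] := int_qS _ de det_rand.
have E1 : (fun x => \sum_(y < n.+1) det_classifier R hh x y * S de x y) =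
  (fun x => S de x (hh x)).
  by apply: funext => x; rewrite /det_classifier sum_ind_eq.
by rewrite -E1.
Qed.

Definition Mb de x := \sum_(y < n.+1) `|S de x y|.

Lemma Mb_int de : mu.-integrable setT (EFin \o Mb de).
Proof. by apply: integrable_sumR => y; exact: integrable_norm (iS de y). Qed.

Lemma S_le_Mb de x y : `|S de x y| <= Mb de x.
Proof.
rewrite /Mb (bigD1 y) //= lerDl; apply: sumr_ge0 => i _; exact: normr_ge0.
Qed.

Lemma integrableBR (f1 f2 : TX -> R) :
  mu.-integrable setT (EFin \o f1) -> mu.-integrable setT (EFin \o f2) ->
  mu.-integrable setT (EFin \o (fun x => f1 x - f2 x)).
Proof.
move=> i1 i2.
have -> : EFin \o (fun x => f1 x - f2 x) = ((EFin \o f1) \- (EFin \o f2))%E.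
  by apply: funext => x /=; rewrite EFinB.
exact: integrableB.
Qed.

Lemma dir (de : 'I_C -> 'I_K -> R) (D : R) :
  (forall c, \sum_(k in Ic c) de c k = 0) ->
  (forall t, 0 < t -> t <= 1 ->
     Nn (fun c k => psi c k + t * de c k) <= Nn psi + t * D) ->
  - (\sum_(c < C) \sum_(k in Ic c) de c k * bh c k) <= alpha / 2 * D.
Proof.
move=> rowd ND.
pose pt t := fun c k => psi c k + t * de c k.
pose Lt t x y := r x y - S (pt t) x y.
have LtE t x y : Lt t x y = L x y - t * S de x y.
  by rewrite /Lt /pt S_lin /L opprD addrA.
pose ht t x := argmin_first (Lt t x).
pose pht t x := Lt t x (ht t x).
have mLt t y : measurable_fun setT (fun x => Lt t x y).
  exact: measurable_funB (mr y) (mS _ y).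
have pht_le t x y : pht t x <= Lt t x y by exact: argmin_firstP.
have mpht t : measurable_fun setT (pht t).
  by apply: measurable_argmin_app => y; exact: mLt.
have close t x : 0 <= t -> `|pht t x - phi0 x| <= t * Mb de x.
  move=> t0.
  have h1 := pht_le t x (hh x); rewrite LtE in h1.
  have h2 : phi0 x - t * S de x (ht t x) <= pht t x.
    by rewrite /pht LtE; have := phi0_le x (ht t x); lra.
  have s1 := S_le_Mb de x (hh x); have s2 := S_le_Mb de x (ht t x).
  have b1 : - (t * S de x (hh x)) <= t * Mb de x.
    rewrite -mulrN; apply: (ler_wpM2l t0); apply: (le_trans _ s1).
    by rewrite -normrN ler_norm.
  have b2 : t * S de x (ht t x) <= t * Mb de x.
    by apply: (ler_wpM2l t0); apply: (le_trans _ s2); rewrite ler_norm.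
  rewrite ler_norml; apply/andP; split; rewrite /phi0 in h1 h2 *; lra.
have pint t : 0 <= t -> mu.-integrable setT (EFin \o pht t).
  move=> t0; apply: (int_close (pht t) phi0 (fun x => t * Mb de x) phi0_int (mpht t)).
  - exact: integrableZR (Mb_int de).
  - by move=> x; apply: close.
have feas t : 0 <= t -> dual_feasible r g mu yc Ic (pht t) (pt t).
  move=> t0; apply: feasI; first exact: pint.
  - by move=> x y; have := pht_le t x y; rewrite /Lt; lra.
  - by move=> c; rewrite /pt big_split /= -mulr_sumr rowd psi_row mulr0 addr0.
have key t : 0 < t -> t <= 1 ->
    Rintegral mu setT (fun x => (pht t x - phi0 x) / t) <= alpha / 2 * D.
  move=> t0 t1.
  have := optI _ _ (feas t (ltW t0)); rewrite -Rint_phi0 => H.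
  have HN := ND t t0 t1.
  have al : 0 <= alpha / 2 by case/andP: alpha01 => a0 _; rewrite divr_ge0.
  have HH : Rintegral mu setT (pht t) - Rintegral mu setT phi0 <=
      alpha / 2 * (t * D).
    by have := ler_wpM2l al HN; rewrite mulrDr => HN'; lra.
  have -> : Rintegral mu setT (fun x => (pht t x - phi0 x) / t) =
      t^-1 * (Rintegral mu setT (pht t) - Rintegral mu setT phi0).
    rewrite -RintegralB //; [|exact: pint (ltW t0)|exact: phi0_int].
    rewrite -RintegralZl //; last by apply: integrableBR; [exact: pint (ltW t0)|exact: phi0_int].
    by apply: eq_Rintegral => x _; rewrite mulrC.
  have ti : 0 <= t^-1 by rewrite invr_ge0 ltW.
  have := ler_wpM2l ti HH.
  by rewrite mulrCA mulKf ?gt_eqF.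
pose tm (m : nat) : R := (m.+1%:R)^-1.
have tm0 m : 0 < tm m by rewrite invr_gt0 ltr0Sn.
have tm1 m : tm m <= 1 by rewrite invf_le1 ?ltr0Sn // ler1n.
pose f_ m x := ((pht (tm m) x - phi0 x) / tm m)%:E.
pose fl x := (- S de x (hh x))%:E.
have mf_ m : measurable_fun setT (f_ m).
  apply/measurable_EFinP; apply: measurable_funM; last exact: measurable_cst.
  by apply: measurable_funB; [exact: mpht|exact: mphi0].
have mfl : measurable_fun setT fl.
  apply/measurable_EFinP; apply: measurable_funN; apply: m_app => y; exact: mS.
have ff : {ae mu, forall x, setT x -> f_ ^~ x @ \oo --> fl x}.
  have U := uniqA (W psi).
  apply: filterS U => x [y0 [Hy0 Hu]] _.
  have eL : (fun y' => r x y' - \sum_(k < K) g x k * W psi y' k) = L x.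
    by apply: funext => y'; rewrite /L SE.
  rewrite eL in Hy0 Hu; clear eL.
  have hx : hh x = y0 by rewrite hhE; apply/esym/Hu; exact: argmin_firstP.
  have gap y : y != y0 -> L x y0 < L x y.
    move=> ny; rewrite lt_neqAle Hy0 andbT; apply/negP => /eqP e.
    by move/negP: ny; apply; apply/eqP/esym/Hu => y'; rewrite -e; exact: Hy0.
  have ev : \forall m \near \oo, forall y, y != y0 ->
      tm m * (`|S de x y| + `|S de x y0|) < L x y - L x y0.
    apply: filter_forall => y.
    have [->|ny] := eqVneq y y0; first by apply: nearW => m /=.
    set c := `|S de x y| + `|S de x y0|.
    have g0 : 0 < L x y - L x y0 by rewrite subr_gt0 gap.
    have [N HN] : exists N : nat, c / (L x y - L x y0) < N%:R.
      by exists (Num.trunc (c / (L x y - L x y0))).+1; exact: truncnS_gt.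
    apply: filterS (nbhs_infty_ge N) => m Nm _.
    have : c / (L x y - L x y0) < m.+1%:R.
      by apply: (lt_le_trans HN); rewrite ler_nat; apply: (leq_trans Nm).
    rewrite ltr_pdivrMr // => h.
    by rewrite /tm mulrC ltr_pdivrMr ?ltr0Sn // mulrC.
  apply: cvg_near_cst; apply: filterS ev => m Hm.
  set t := tm m; have t0 : 0 < t := tm0 m.
  have htx : ht t x = y0.
    apply/eqP; apply/negPn/negP => ne.
    have := pht_le t x y0; rewrite /pht !LtE => hle.
    have := Hm _ ne => hlt.
    have q1 : S de x (ht t x) <= `|S de x (ht t x)| := ler_norm _.
    have q2 : - S de x y0 <= `|S de x y0| by rewrite -normrN ler_norm.
    have := ler_wpM2l (ltW t0) (lerD q1 q2) => q3.
    rewrite -/t in hlt; rewrite mulrDr mulrN in q3.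
    clear ne hx Hu Hy0 gap Hm; lra.
  rewrite /f_ /fl -/t; congr EFin.
  rewrite /pht htx LtE /phi0 hx.
  by field; rewrite gt_eqF.
have fg : {ae mu, forall x n, setT x -> (`|f_ n x| <= (EFin \o Mb de) x)%E}.
  apply: aeW => x m _; rewrite /f_ /= lee_fin normrM normfV.
  rewrite [`|tm m|]ger0_norm; last exact: ltW (tm0 m).
  rewrite ler_pdivrMr ?tm0 // mulrC; apply: close; exact: ltW (tm0 m).
have [_ _ conv] := @dominated_convergence _ _ _ mu setT measurableT f_ fl
  (EFin \o Mb de) mf_ mfl ff (Mb_int de) fg.
have lim_le : (\int[mu]_x fl x <= (alpha / 2 * D)%:E)%E.
  rewrite -(cvg_lim (@ereal_hausdorff R) conv).
  apply: lime_le; first exact: (cvgP _ conv).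
  apply: nearW => m /=.
  have im : mu.-integrable setT (EFin \o (fun x => (pht (tm m) x - phi0 x) / tm m)).
    apply: integrableZRr; apply: integrableBR; [exact: pint (ltW (tm0 m))|exact: phi0_int].
  rewrite -(fineK (integrable_fin_num measurableT im)) lee_fin.
  exact: key (tm0 m) (tm1 m).
have [iSh RSh] := int_Sh de.
have ifl : mu.-integrable setT fl.
  rewrite (_ : fl = EFin \o (fun x => -1 * S de x (hh x))); last first.
    by apply: funext => x; rewrite /fl /= mulN1r.
  exact: integrableZR.
move: lim_le; rewrite -(fineK (integrable_fin_num measurableT ifl)) lee_fin.
rewrite (_ : fine _ = Rintegral mu setT (fun x => -1 * S de x (hh x))); last first.
  by rewrite /Rintegral; congr fine; apply: eq_integral => x _; rewrite /fl mulN1r.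
by rewrite RintegralZl // RSh mulN1r.
Qed.
Lemma sum_ind_in (A : {set 'I_K}) k (f : 'I_K -> R) : k \in A ->
  \sum_(j in A) (j == k)%:R * f j = f k.
Proof.
move=> kA; rewrite (bigD1 k) //= eqxx mul1r big1 ?addr0 //.
by move=> j /andP[_ /negbTE ->]; rewrite mul0r.
Qed.

Lemma sum_ind_in1 (A : {set 'I_K}) k : k \in A ->
  \sum_(j in A) ((j == k)%:R : R) = 1.
Proof.
move=> kA; rewrite (bigD1 k) //= eqxx big1 ?addr0 //.
by move=> j /andP[_ /negbTE ->].
Qed.

Lemma Nn_tri de t : 0 <= t ->
  Nn (fun c k => psi c k + t * de c k) <= Nn psi + t * Nn de.
Proof.
move=> t0; rewrite /Nn mulr_sumr -big_split /=; apply: ler_sum => c _.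
rewrite mulr_sumr -big_split /=; apply: ler_sum => k _.
by rewrite (le_trans (ler_normD _ _)) // normrM ger0_norm.
Qed.

Lemma fair_one c k k' : k \in Ic c -> k' \in Ic c -> bh c k' - bh c k <= alpha.
Proof.
move=> kin k'in.
have [<-|nk] := eqVneq k k'; first by rewrite subrr; case/andP: alpha01.
pose de := fun c' j => if c' == c then ((j == k)%:R - (j == k')%:R) else (0 : R).
have rowd c' : \sum_(j in Ic c') de c' j = 0.
  rewrite /de; case: eqP => [->|_]; last by rewrite big1.
  by rewrite sumrB !sum_ind_in1 // subrr.
have Nde : Nn de = 2.
  rewrite /Nn (bigD1 c) //= [X in _ + X]big1 ?addr0; last first.
    by move=> c' nc; rewrite /de (negbTE nc) big1 // => j _; rewrite normr0.
  rewrite /de eqxx (bigD1 k) //= (bigD1 k') /=; last by rewrite k'in eq_sym.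
  rewrite big1 ?addr0; last first.
    by move=> j /andP[/andP[_ /negbTE ->] /negbTE ->]; rewrite subrr normr0.
  rewrite eqxx (negbTE nk) eq_sym (negbTE nk) eqxx.
  by rewrite subr0 sub0r normrN normr1.
have := dir de (Nn de) rowd (fun t t0 _ => Nn_tri de t (ltW t0)).
rewrite Nde (bigD1 c) //= [X in _ + X]big1 ?addr0; last first.
  by move=> c' nc; rewrite /de (negbTE nc) big1 // => j _; rewrite mul0r.
rewrite /de eqxx.
under eq_bigr do rewrite mulrBl.
rewrite sumrB (sum_ind_in _ _ (fun j => bh c j) kin) (sum_ind_in _ _ (fun j => bh c j) k'in).
rewrite divfK ?pnatr_eq0 //; lra.
Qed.

Lemma fair_h : group_fair P X E yc Ic alpha (det_classifier R hh).
Proof.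
move=> c k k' kin k'in; rewrite ler_norml.
have := fair_one c k k' kin k'in; have := fair_one c k' k k'in kin.
rewrite /bh /B => h1 h2; apply/andP; split; lra.
Qed.

Lemma FL (Bq : 'I_C -> 'I_K -> R) :
  (forall c k k', k \in Ic c -> k' \in Ic c -> `|Bq c k - Bq c k'| <= alpha) ->
  - (alpha / 2 * Nn psi) <= \sum_(c < C) \sum_(k in Ic c) psi c k * Bq c k.
Proof.
move=> Hf; rewrite /Nn mulr_sumr -sumrN; apply: ler_sum => c _.
case: (pickP (mem (Ic c))) => [k0 k0in | none]; last first.
  by rewrite !big_pred0 // mulr0 oppr0.
case: (@arg_maxP _ R _ k0 (mem (Ic c)) (Bq c) k0in) => kM kMin HM.
case: (@arg_minP _ R _ k0 (mem (Ic c)) (Bq c) k0in) => km kmin Hm.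
set m := (Bq c kM + Bq c km) / 2.
have -> : \sum_(k in Ic c) psi c k * Bq c k =
    \sum_(k in Ic c) psi c k * (Bq c k - m).
  under [RHS]eq_bigr do rewrite mulrBr.
  by rewrite sumrB -mulr_suml psi_row mul0r subr0.
rewrite mulr_sumr -sumrN; apply: ler_sum => k kin.
have b1 : Bq c k <= Bq c kM := HM k kin; have b2 : Bq c km <= Bq c k := Hm k kin.
have hM := Hf c kM km kMin kmin.
have hb : `|Bq c k - m| <= alpha / 2.
  move: hM; rewrite /m !ler_norml => /andP[h1 h2]; apply/andP; split; lra.
have := ler_norm (- (psi c k * (Bq c k - m))); rewrite normrN normrM => h.
have := ler_wpM2l (normr_ge0 (psi c k)) hb => h'.
rewrite mulrC; lra.
Qed.
Lemma risk_mu (q : TX -> 'I_n.+1 -> R) : rand_classifier q ->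
  risk P X r q = (\int[mu]_x (\sum_(y < n.+1) q x y * r x y)%:E)%E.
Proof.
case=> _ _ mq; rewrite /risk.
have mF : measurable_fun setT (fun x => (\sum_(y < n.+1) q x y * r x y)%:E).
  apply/measurable_EFinP; apply: measurable_sum => y; exact: measurable_funM.
by rewrite (PF P X setT _ measurableT mF) preimage_setT.
Qed.

Lemma wd (q : TX -> 'I_n.+1 -> R) : rand_classifier q ->
  group_fair P X E yc Ic alpha q ->
  ((Rintegral mu setT phi - alpha / 2 * Nn psi)%:E <= risk P X r q)%E.
Proof.
move=> rq fq.
have [iq Rq] := int_qS q psi rq.
case: (rq) => q0 q1 mq.
rewrite risk_mu //.
pose G x := phi x + \sum_(y < n.+1) q x y * S psi x y.
have iG : mu.-integrable setT (EFin \o G).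
  rewrite (_ : EFin \o G = ((EFin \o phi) \+
      (EFin \o (fun x => (\sum_(y < n.+1) q x y * S psi x y)%R)))%E).
    exact: integrableD phi_int iq.
  by apply: funext => x /=; rewrite EFinD.
have GF x : G x <= \sum_(y < n.+1) q x y * r x y.
  rewrite /G -[phi x]mul1r -(q1 x) mulr_suml -big_split /=; apply: ler_sum => y _.
  rewrite -mulrDr; apply: (ler_wpM2l (q0 x y)).
  by have := phi_le_L x y; rewrite /L; lra.
have mF : measurable_fun setT (fun x => (\sum_(y < n.+1) q x y * r x y)%:E).
  apply/measurable_EFinP; apply: measurable_sum => y; exact: measurable_funM.
have F0 x : (0 <= (\sum_(y < n.+1) q x y * r x y)%:E)%E.
  by rewrite lee_fin sumr_ge0 // => y _; rewrite mulr_ge0.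
have low : ((Rintegral mu setT G)%:E <=
    \int[mu]_x (\sum_(y < n.+1) q x y * r x y)%:E)%E.
  have -> : (Rintegral mu setT G)%:E = (\int[mu]_x (EFin \o G) x)%E.
    by rewrite /Rintegral fineK // integrable_fin_num.
  case: (boolP (mu.-integrable setT
      (fun x => (\sum_(y < n.+1) q x y * r x y)%:E))) => iF.
    by apply: le_integral => // x _; rewrite lee_fin; exact: GF.
  have : ~ (\int[mu]_x `|(\sum_(y < n.+1) q x y * r x y)%:E| < +oo)%E.
    by move=> h; move/negP: iF; apply; apply/integrableP; split.
  have -> : (\int[mu]_x `|(\sum_(y < n.+1) q x y * r x y)%:E|)%E =
      (\int[mu]_x (\sum_(y < n.+1) q x y * r x y)%:E)%E.
    by apply: eq_integral => x _; rewrite gee0_abs.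
  rewrite ltey => /negP; rewrite negbK => /eqP ->; exact: leey.
apply: le_trans low.
rewrite lee_fin /G RintegralD //; last exact: phi_int.
rewrite Rq.
have := FL (fun c k => B q (yc c) k) fq; lra.
Qed.

Lemma risk_h : risk P X r (det_classifier R hh) =
  (Rintegral mu setT phi + \sum_(c < C) \sum_(k in Ic c) psi c k * bh c k)%:E.
Proof.
rewrite risk_mu; last exact: det_rand.
have [iSh RSh] := int_Sh psi.
have iT : mu.-integrable setT (EFin \o (fun x => phi0 x + S psi x (hh x))).
  rewrite (_ : EFin \o _ = ((EFin \o phi0) \+
      (EFin \o (fun x => S psi x (hh x))))%E).
    exact: integrableD phi0_int iSh.
  by apply: funext => x /=; rewrite EFinD.
transitivity (\int[mu]_x (EFin \o (fun x => (phi0 x + S psi x (hh x))%R)) x)%E.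
  apply: eq_integral => x _ /=.
  by rewrite /det_classifier sum_ind_eq /phi0 /L subrK.
rewrite -(fineK (integrable_fin_num measurableT iT)); congr EFin.
change (Rintegral mu setT (fun x => phi0 x + S psi x (hh x)) =
  Rintegral mu setT phi + \sum_(c < C) \sum_(k in Ic c) psi c k * bh c k).
by rewrite RintegralD //; [rewrite Rint_phi0 RSh|exact: phi0_int].
Qed.

Lemma opt_h : \sum_(c < C) \sum_(k in Ic c) psi c k * bh c k <=
  - (alpha / 2 * Nn psi).
Proof.
have rowd c : \sum_(k in Ic c) - psi c k = 0 by rewrite sumrN psi_row oppr0.
have ND t : 0 < t -> t <= 1 ->
    Nn (fun c k => psi c k + t * - psi c k) <= Nn psi + t * - Nn psi.
  move=> t0 t1.
  have e : Nn (fun c k => psi c k + t * - psi c k) = (1 - t) * Nn psi.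
    rewrite /Nn mulr_sumr; apply: eq_bigr => c _; rewrite mulr_sumr.
    apply: eq_bigr => k _.
    rewrite mulrN -{1}[psi c k]mul1r -mulrBl normrM ger0_norm //.
    by rewrite subr_ge0.
  by rewrite e mulrBl mul1r mulrN; lra.
have := dir (fun c k => - psi c k) (- Nn psi) rowd ND.
under eq_bigr do under eq_bigr do rewrite mulNr.
under eq_bigr do rewrite sumrN.
by rewrite sumrN opprK mulrN.
Qed.

Lemma main_result :
  let w := fun (y : 'I_n.+1) (k : 'I_K) =>
    - \sum_(c < C | (yc c == y) && (k \in Ic c)) psi c k / fine (P (E k)) in
  let h := fun x => argmin_first (fun y => r x y + \sum_(k < K) g x k * w y k) in
  [/\ rand_classifier (det_classifier R h),
      group_fair P X E yc Ic alpha (det_classifier R h)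
    & forall q : TX -> 'I_n.+1 -> R, rand_classifier q ->
        group_fair P X E yc Ic alpha q ->
        (risk P X r (det_classifier R h) <= risk P X r q)%E].
Proof.
move=> w h.
split; [exact: det_rand|exact: fair_h|].
move=> q rq fq.
apply: (le_trans _ (wd q rq fq)).
rewrite (risk_h : risk P X r (det_classifier R h) = _) lee_fin.
by have := opt_h; lra.
Qed.
End Main.

Theorem theorem1 (R : realType) (dO : measure_display) (Om : measurableType dO)
  (P : probability Om R) (d : measure_display) (TX : measurableType d)
  (X : {mfun Om >-> TX}) (n K C : nat) (E : 'I_K -> set Om)
  (r : TX -> 'I_n.+1 -> R) (g : TX -> 'I_K -> R)
  (yc : 'I_C -> 'I_n.+1) (Ic : 'I_C -> {set 'I_K}) (alpha : R)
  (phi : TX -> R) (psi : 'I_C -> 'I_K -> R) :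
  (forall k, measurable (E k)) ->
  (forall k, (0 < P (E k))%E) ->
  (forall x y, 0 <= r x y) ->
  (forall y, measurable_fun setT (fun x => r x y)) ->
  is_cond_prob P X E g ->
  0 <= alpha <= 1 ->
  uniqueness_assumption r g (distribution P X) ->
  dual_maximizer r g (distribution P X) yc Ic alpha phi psi ->
  let w := fun (y : 'I_n.+1) (k : 'I_K) =>
    - \sum_(c < C | (yc c == y) && (k \in Ic c)) psi c k / fine (P (E k)) in
  let h := fun x => argmin_first (fun y => r x y + \sum_(k < K) g x k * w y k) in
  [/\ rand_classifier (det_classifier R h),
      group_fair P X E yc Ic alpha (det_classifier R h)
    & forall q : TX -> 'I_n.+1 -> R, rand_classifier q ->
        group_fair P X E yc Ic alpha q ->
        (risk P X r (det_classifier R h) <= risk P X r q)%E].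
Proof.
move=> mE PE0 r0 mr gcp a01 uA dm.
exact: (@main_result R dO Om P d TX X n K C E r g yc Ic alpha phi psi mE PE0 r0 mr gcp a01 uA dm).
Qed.
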